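(* Let $n=p_1^{m_1}\cdots p_k^{m_k}$ with $m_i>1$ for at least one $i$. Then $\mathcal E_{\mathbb Z_n}\cong K_m\vee H$, where $K_m$ is the complete graph on $m=\prod_{i=1}^k m_i-1$ vertices (the essential nonzero proper ideals) and $H=\mathscr G\big[\mathcal E_{\mathbb Z_n}([I])\big]_{I\in V(\mathscr G)}$ is the $\mathscr G$-generalized join of the edgeless graphs $\mathcal E_{\mathbb Z_n}([I])\cong\overline K_{\prod_{i\notin\Xi_I}m_i}$, with $\mathscr G\cong\mathbb{AIG}(\mathbb Z_{p_1p_2\cdots p_k})$.
   Context: Primes $p_1<\dots<p_k$, positive integers $m_i$. Nonzero proper ideals of $\mathbb Z_n$ are uniquely $\langle p_1^{r_1}\cdots p_k^{r_k}\rangle$, $0\le r_i\le m_i$, $(r_i)\ne(0,\dots,0),(m_1,\dots,m_k)$; such an ideal is essential iff $r_j\ne m_j$ for all $j$. Essential ideal graph $\mathcal E_{\mathbb Z_n}$: vertices the nonzero proper ideals, distinct $I,K$ adjacent iff $I+K$ is essential. $\mathscr U$ = nonzero proper nonessential ideals; $\Xi_I=\{i:r_i=m_i\}$; $I\preccurlyeq J$ iff $\Xi_I=\Xi_J$, class $[I]$, and $\mathcal E_{\mathbb Z_n}([I])$ the induced subgraph on $[I]$. $\mathscr G$: vertex set the $2^k-2$ ideals $\langle\prod_{i\in S}p_i^{m_i}\rangle$, $S$ nonempty proper subset of $\{1,\dots,k\}$, adjacent iff index sets disjoint. The $\mathscr G$-generalized join $\mathscr G[\Gamma_v]_{v}$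 replaces each vertex $v$ of $\mathscr G$ by $\Gamma_v$ and joins all vertices of $\Gamma_u$ to all vertices of $\Gamma_v$ when $u\sim v$. $\Gamma_1\vee\Gamma_2$ is the join. $\mathbb{AIG}(R)$: vertices nonzero ideals annihilated by some nonzero ideal, $I\sim K$ iff $IK=0$. *)

(* Defs.v *)
From HB Require Import structures.
From mathcomp Require Import all_boot all_order all_algebra.
Set Implicit Arguments. Unset Strict Implicit. Unset Printing Implicit Defensive.
Import GRing.Theory.

Record graph := Graph { vtx : finType; adj : rel vtx }.

Definition giso (G1 G2 : graph) : Prop :=
  exists f : vtx G1 -> vtx G2, bijective f /\ forall x y, adj (f x) (f y) = adj x y.

Definition Kcomplete (m : nat) : graph := @Graph 'I_m (fun x y => x != y).
Definition Kedgeless (t : nat) : graph := @Graph 'I_t (fun _ _ => false).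

Definition gjoin2 (A B : graph) : graph :=
  @Graph (vtx A + vtx B)%type
    (fun x y => match x, y with
                | inl a, inl a' => adj a a'
                | inr b, inr b' => adj b b'
                | _, _ => true end).

Definition isl (A B : Type) (x : A + B) : bool := if x is inl _ then true else false.

Definition gjoin (G : graph) (Gam : vtx G -> graph) : graph :=
  @Graph {v : vtx G & vtx (Gam v)}
    (fun x y => if tag x == tag y then adj (tagged x) (tagged_as x y)
                else adj (tag x) (tag y)).

Local Open Scope ring_scope.

Section Ideals.
Variable n : nat.

Definition is_ideal (I : {set 'Z_n}) : bool :=
  [&& (0 : 'Z_n) \in I,
      [forall x in I, forall y in I, x + y \in I] &
      [forall a : 'Z_n, forall x in I, a * x \in I]].

Definition nzproper (I : {set 'Z_n}) : bool :=
  [&& is_ideal I, I != [set 0] & I != [set: 'Z_n]].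

Definition essential (I : {set 'Z_n}) : bool :=
  [&& is_ideal I, I != [set 0] &
      [forall K : {set 'Z_n}, (is_ideal K && (K != [set 0])) ==> (I :&: K != [set 0])]].

Definition isum (I K : {set 'Z_n}) : {set 'Z_n} := [set x + y | x in I, y in K].

Definition pid (a : 'Z_n) : {set 'Z_n} := [set a * x | x : 'Z_n].

Definition EV := {I : {set 'Z_n} | nzproper I}.
Definition EG : graph :=
  @Graph EV (fun I J => (I != J) && essential (isum (val I) (val J))).

(* the canonical generator d | n with I = <d>: least positive x <= n with x in I *)
Definition gen (I : {set 'Z_n}) : nat :=
  head n [seq x <- iota 1%N n | (x%:R : 'Z_n) \in I].

Variables (k : nat) (p m : 'I_k -> nat).

(* Xi_I = { i : r_i = m_i } where I = <prod p_i^{r_i}> *)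
Definition Xi (I : {set 'Z_n}) : {set 'I_k} :=
  [set i | logn (p i) (gen I) == m i].

Definition pidS (S : {set 'I_k}) : {set 'Z_n} :=
  pid ((\prod_(i in S) p i ^ m i)%N)%:R.

Definition Gvert (I : {set 'Z_n}) : bool :=
  [exists S : {set 'I_k}, [&& S != set0, S != [set: 'I_k] & I == pidS S]].
Definition GV := {I : {set 'Z_n} | Gvert I}.
Definition GG : graph :=
  @Graph GV (fun I J => [exists S : {set 'I_k}, exists T : {set 'I_k},
                           [&& val I == pidS S, val J == pidS T & [disjoint S & T]]]).

Definition block (v : GV) : graph :=
  @Graph {J : EV | Xi (val J) == Xi (val v)} (fun a b => @adj EG (val a) (val b)).

Definition Hgraph : graph := @gjoin GG block.

End Ideals.

Section AIG.
Variable r : nat.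
Definition annih (I K : {set 'Z_r}) : bool := [forall x in I, forall y in K, x * y == 0].
Definition AV := {I : {set 'Z_r} |
  [&& is_ideal I, I != [set 0] &
      [exists K : {set 'Z_r}, [&& is_ideal K, K != [set 0] & annih I K]]]}.
Definition AIG : graph := @Graph AV (fun I J => (I != J) && annih (val I) (val J)).
End AIG.

(* Main.v *)
Require Import Defs.
From mathcomp Require Import all_boot all_order all_algebra.
From mathcomp Require Import zify.
Set Implicit Arguments. Unset Strict Implicit. Unset Printing Implicit Defensive.
Import GRing.Theory.

Lemma dvdn_modE d x n : d %| n -> (d %| x %% n) = (d %| x).
Proof. by move=> dn; rewrite {2}(divn_eq x n) dvdn_addr // dvdn_mull. Qed.

Lemma head_filter_iota (P : pred nat) a l z :
  (exists2 x, a <= x < a + l & P x) ->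
  let h := head z (filter P (iota a l)) in
  [/\ a <= h < a + l, P h & forall y, a <= y < h -> ~~ P y].
Proof.
elim: l a => [|l IH] a [x hx Px] /=.
  by move: hx; rewrite addn0 => /andP[h1 h2]; move: (leq_trans h2 h1); rewrite ltnn.
case Pa: (P a) => /=.
  split => //; first by rewrite leqnn addnS ltnS leq_addr.
  by move=> y /andP[h1 h2]; move: (leq_trans h2 h1); rewrite ltnn.
have hx' : a.+1 <= x < a.+1 + l.
  move: hx; rewrite addSnnS => /andP[h1 ->]; rewrite andbT ltn_neqAle h1 andbT.
  by apply/eqP => E; rewrite -E Pa in Px.
have [/andP[h1 h2] Ph Hy] := IH a.+1 (ex_intro2 _ _ x hx' Px).
split => //.
  by rewrite (ltnW h1) /= -addSnnS.
move=> y /andP[h3 h4]; case: (ltngtP a y) h3 => // [ay _|<- _]; last by rewrite Pa.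
by apply: Hy; rewrite ay h4.
Qed.

Section IdealTheory.
Variable n : nat.
Hypothesis n_gt1 : 1 < n.
Local Notation Z := 'Z_n.

Lemma n_gt0 : 0 < n. Proof. exact: ltnW. Qed.

Lemma valZ (x : nat) : val ((x%:R)%R : Z) = x %% n.
Proof. exact: val_Zp_nat. Qed.

Lemma natrZ (z : Z) : ((val z)%:R)%R = z.
Proof. exact: natr_Zp. Qed.

Lemma valZ_lt (z : Z) : val z < n.
Proof. by have := ltn_ord z; rewrite [X in _ < X]Zp_cast. Qed.

Lemma natZ_n : ((n%:R)%R : Z) = 0%R.
Proof. exact: pchar_Zp. Qed.

Variable I : {set Z}.
Hypothesis hI : is_ideal I.

Lemma idl0 : (0%R : Z) \in I.
Proof. by case/and3P: hI. Qed.
Lemma idlD x y : x \in I -> y \in I -> (x + y)%R \in I.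
Proof. by case/and3P: hI => _ /forall_inP H _ xI yI; have /forall_inP := H x xI; apply. Qed.
Lemma idlM a x : x \in I -> (a * x)%R \in I.
Proof. by case/and3P: hI => _ _ /forallP H xI; have /forall_inP := H a; apply. Qed.
Lemma idlN x : x \in I -> (- x)%R \in I.
Proof. by move=> xI; rewrite -mulN1r; apply: idlM. Qed.

Lemma gen_spec : [/\ 0 < gen I <= n, ((gen I)%:R)%R \in I &
   forall y, 0 < y < gen I -> ((y%:R)%R : Z) \notin I].
Proof.
have := @head_filter_iota (fun x => ((x%:R)%R : Z) \in I) 1 n n.
case.
  by exists n; [rewrite n_gt0 add1n leqnn | rewrite /= natZ_n idl0].
by rewrite add1n ltnS => -> ?; split.
Qed.

Lemma gen_gt0 : 0 < gen I. Proof. by case: gen_spec => /andP[]. Qed.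

Lemma gen_dvd x : (((x%:R)%R : Z) \in I) = (gen I %| x).
Proof.
have [/andP[g0 gn] gI gmin] := gen_spec.
apply/idP/idP => [xI|/dvdnP[q ->]]; last by rewrite natrM idlM.
have r_in : (((x %% gen I)%:R)%R : Z) \in I.
  have -> : ((x %% gen I)%:R)%R = ((x%:R)%R + - (((x %/ gen I)%:R)%R * (gen I)%:R))%R :> Z.
    by rewrite {2}(divn_eq x (gen I)) natrD natrM addrAC subrr add0r.
  by apply: idlD => //; apply: idlN; apply: idlM.
apply/negPn/negP => ndvd.
have := gmin (x %% gen I); rewrite r_in ltn_mod g0 andbT lt0n.
by rewrite -/(dvdn _ _) ndvd => /(_ isT).
Qed.

Lemma memI (z : Z) : (z \in I) = (gen I %| val z).
Proof. by rewrite -gen_dvd natrZ. Qed.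

Lemma gen_dvdn : gen I %| n.
Proof. by rewrite -gen_dvd natZ_n idl0. Qed.

Lemma ideal_eqD : I = [set z : Z | gen I %| val z].
Proof. by apply/setP => z; rewrite inE memI. Qed.

Lemma zero_iff : (I == [set 0%R]) = (gen I == n).
Proof.
apply/eqP/eqP => [E|E].
  have := gen_spec; case => /andP[g0 gn] gI _.
  have : ((gen I)%:R)%R \in [set (0%R : Z)] by rewrite -E.
  rewrite inE => /eqP/(congr1 val); rewrite valZ /= => /eqP.
  rewrite -/(dvdn _ _) => /dvdn_leq => /(_ g0) ng; apply/eqP; rewrite eqn_leq gn ng.
  done.
apply/setP => z; rewrite memI E inE; apply/idP/eqP => [/dvdn_leq|->]; last by rewrite dvdn0.
have := valZ_lt z; case: (posnP (val z)) => [v0 _ _|vp vlt H].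
  by apply: val_inj.
by move: (H isT); rewrite leqNgt vlt.
Qed.

Lemma full_iff : (I == setT) = (gen I == 1%N).
Proof.
apply/eqP/eqP => [E|E].
  by apply/eqP; rewrite -dvdn1 -gen_dvd E inE.
by apply/setP => z; rewrite memI E dvd1n inE.
Qed.

End IdealTheory.

Section Ideal2.
Variable n : nat.
Hypothesis n_gt1 : 1 < n.
Local Notation Z := 'Z_n.

Definition Dn d : {set Z} := [set z : Z | d %| val z].

Lemma Dn_ideal d : d %| n -> is_ideal (Dn d).
Proof.
move=> dn; apply/and3P; split.
- by rewrite inE dvdn0.
- apply/forall_inP => x; rewrite inE => hx; apply/forall_inP => y; rewrite inE => hy.
  by rewrite inE -(natrZ x) -(natrZ y) -natrD valZ // dvdn_modE // dvdn_add.
- apply/forallP => a; apply/forall_inP => x; rewrite inE => hx.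
  by rewrite inE -(natrZ a) -(natrZ x) -natrM valZ // dvdn_modE // dvdn_mull.
Qed.

Lemma gen_Dn d : d %| n -> gen (Dn d) = d.
Proof.
move=> dn; have hD := Dn_ideal dn.
have H x : (gen (Dn d) %| x) = (d %| x).
  by rewrite -(gen_dvd n_gt1 hD) inE valZ // dvdn_modE.
by apply/eqP; rewrite eqn_dvd H dvdnn -H dvdnn.
Qed.

Lemma pid_Dn d : d %| n -> pid ((d%:R)%R : Z) = Dn d.
Proof.
move=> dn; apply/setP => z; rewrite inE; apply/imsetP/idP => [[x _ ->]|hz].
  by rewrite -(natrZ x) -natrM valZ // dvdn_modE // dvdn_mulr.
exists ((val z %/ d)%:R)%R => //.
by rewrite -natrM mulnC divnK // natrZ.
Qed.

Lemma isum_ideal (I J : {set Z}) : is_ideal I -> is_ideal J -> is_ideal (isum I J).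
Proof.
move=> hI hJ; apply/and3P; split.
- by apply/imset2P; exists 0%R 0%R; rewrite ?addr0 ?idl0.
- apply/forall_inP => x /imset2P[a b aI bJ ->]; apply/forall_inP => y /imset2P[c d cI dJ ->].
  apply/imset2P; exists (a + c)%R (b + d)%R; rewrite ?idlD //.
  by rewrite addrACA.
- apply/forallP => u; apply/forall_inP => x /imset2P[a b aI bJ ->].
  by apply/imset2P; exists (u * a)%R (u * b)%R; rewrite ?idlM // mulrDr.
Qed.

End Ideal2.

Section Expo.
Variables (k : nat) (p : 'I_k -> nat).
Hypothesis hp : forall i, prime (p i).
Hypothesis hlt : forall i j : 'I_k, i < j -> p i < p j.

Definition P (e : 'I_k -> nat) := \prod_(i < k) p i ^ e i.

Lemma p_inj : injective p.
Proof.
move=> i j E; apply/eqP; case: (ltngtP i j) => [h|h|/val_inj -> //].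
  by have := hlt h; rewrite E ltnn.
by have := hlt h; rewrite E ltnn.
Qed.

Lemma P_gt0 e : 0 < P e.
Proof. by apply: prodn_gt0 => i; rewrite expn_gt0 prime_gt0. Qed.

Lemma logP_sum q e : logn q (P e) = \sum_(i < k) e i * (q == p i).
Proof.
have H := @big_rec2 nat nat (fun a b => 0 < a /\ logn q a = b) 1 muln 0 addn
  (conj isT (logn1 q)) _ (index_enum 'I_k) xpredT (fun i => p i ^ e i) (fun i => e i * (q == p i)).
apply: (proj2 (H _)) => i a b _ [a0 <-]; split; first by rewrite muln_gt0 a0 expn_gt0 prime_gt0.
have pe0 : 0 < p i ^ e i by rewrite expn_gt0 prime_gt0.
by rewrite lognM // lognX logn_prime.
Qed.

Lemma logP e j : logn (p j) (P e) = e j.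
Proof.
rewrite logP_sum (bigD1 j) //= eqxx muln1 big1 ?addn0 // => i ij.
by rewrite eq_sym (inj_eq p_inj) (negbTE ij) muln0.
Qed.

Lemma logP_out q e : (forall i, q != p i) -> logn q (P e) = 0.
Proof. by move=> H; rewrite logP_sum big1 // => i _; rewrite (negbTE (H i)) muln0. Qed.

Lemma logP_pos q e : 0 < logn q (P e) -> exists i, q = p i.
Proof.
move=> h; case: (boolP [exists i, q == p i]) => [/existsP[i /eqP ->]|/existsPn H].
  by exists i.
by rewrite logP_out in h.
Qed.

Lemma pe_dvdP e i : p i ^ e i %| P e.
Proof. by rewrite pfactor_dvdn // ?P_gt0 // logP. Qed.

Lemma dvdP e x : 0 < x -> (P e %| x) = [forall i, e i <= logn (p i) x].
Proof.
move=> x0; apply/idP/forallP => [H i|H].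
  by rewrite -pfactor_dvdn //; apply: dvdn_trans (pe_dvdP e i) H.
apply/dvdn_partP; first exact: P_gt0.
move=> q; rewrite /= -logn_gt0 => /logP_pos[i ->].
by rewrite p_part logP pfactor_dvdn.
Qed.

Lemma P_eq e f : P e = P f -> forall i, e i = f i.
Proof. by move=> E i; rewrite -(logP e) E logP. Qed.

Lemma P_ext e f : (forall i, e i = f i) -> P e = P f.
Proof. by move=> H; apply: eq_bigr => i _; rewrite H. Qed.

Lemma P_dec e x : x %| P e -> x = P (fun i => logn (p i) x).
Proof.
move=> xd; have x0 : 0 < x by apply: dvdn_gt0 xd; apply: P_gt0.
apply: eqn_from_log => //; first exact: P_gt0.
move=> q; case: (boolP [exists i, q == p i]) => [/existsP[i /eqP ->]|/existsPn H].
  by rewrite logP.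
rewrite logP_out //; apply/eqP; rewrite -leqn0.
by rewrite -(logP_out e H); apply: dvdn_leq_log => //; apply: P_gt0.
Qed.

Lemma PM e f : P e * P f = P (fun i => e i + f i).
Proof. by rewrite /P -big_split; apply: eq_bigr => i _; rewrite expnD. Qed.

Lemma P_dvd_le e f : (P e %| P f) = [forall i, e i <= f i].
Proof.
rewrite dvdP ?P_gt0 //; apply: eq_forallb => i; by rewrite logP.
Qed.

Lemma P_gt1 e i : 0 < e i -> 1 < P e.
Proof.
move=> h; have := dvdn_leq (P_gt0 e) (pe_dvdP e i).
apply: leq_trans; rewrite -{1}(expn0 (p i)) ltn_exp2l //; exact: prime_gt1.
Qed.

Lemma log_le e x : x %| P e -> forall i, logn (p i) x <= e i.
Proof. by move=> xd i; rewrite -(logP e i); apply: dvdn_leq_log => //; apply: P_gt0. Qed.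

End Expo.

Lemma card_fam k B (F : 'I_k -> pred 'I_B) :
  #|[set a : {ffun 'I_k -> 'I_B} | [forall i, F i (a i)]]| = \prod_(i < k) #|F i|.
Proof.
have := @card_family 'I_k (fun _ => 'I_B) F.
rewrite foldrE big_map big_enum /= => <-.
apply: eq_card => a; rewrite inE; apply/forallP/familyP => H i; have := H i; by [].
Qed.

Lemma card_ltc B c : c <= B -> #|(fun y : 'I_B => y < c) : pred 'I_B| = c.
Proof.
move=> cB.
transitivity #|[set widen_ord cB j | j : 'I_c]|; last first.
  rewrite card_imset ?card_ord // => a b E; apply: val_inj; exact: (congr1 val E).
apply: eq_card => y; rewrite /in_mem /=; apply/idP/imsetP => [yc|[j _ ->]] /=; last exact: ltn_ord.
  by exists (Ordinal yc) => //; apply: val_inj.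
Qed.

Lemma card_bij (T : finType) N : #|T| = N -> exists f : T -> 'I_N, bijective f.
Proof.
move=> E; exists (fun x => cast_ord E (enum_rank x)).
exists (fun i => enum_val (cast_ord (esym E) i)) => [x|i].
  by rewrite cast_ordK enum_rankK.
by rewrite enum_valK cast_ordKV.
Qed.

Section Vert.
Variables (k : nat) (p m : 'I_k -> nat).
Hypothesis hp : forall i, prime (p i).
Hypothesis hlt : forall i j : 'I_k, i < j -> p i < p j.
Hypothesis hm : forall i, 0 < m i.
Variable i0 : 'I_k.

Local Notation n := (P p m).
Local Notation PP := (P p).
Let logP' := logP hp hlt.
Let dvdP' := dvdP hp hlt.
Let P_dvd_le' := P_dvd_le hp hlt.
Let P_gt0' := P_gt0 hp.

Lemma n_gt1 : 1 < n.
Proof. exact: (P_gt1 hp hlt (hm i0)). Qed.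
Local Notation Z := 'Z_n.
Let n1 := n_gt1.
Implicit Types I J K : {set Z}.

Definition lg (I : {set Z}) i := logn (p i) (gen I).

Lemma gen_P I : is_ideal I -> gen I = PP (lg I).
Proof. by move=> hI; apply: (P_dec hp hlt); apply: gen_dvdn. Qed.

Lemma lg_le I : is_ideal I -> forall i, lg I i <= m i.
Proof. by move=> hI; apply: (log_le hp hlt); apply: gen_dvdn. Qed.

Lemma PP_dvd_n e : (forall i, e i <= m i) -> PP e %| n.
Proof. by move=> H; rewrite P_dvd_le'; apply/forallP. Qed.

Lemma ideal_eqP I : is_ideal I -> I = Dn n (PP (lg I)).
Proof. by move=> hI; rewrite -gen_P //; apply: ideal_eqD. Qed.

Lemma DnP_ideal e : (forall i, e i <= m i) -> is_ideal (Dn n (PP e)).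
Proof. by move=> H; apply: Dn_ideal => //; apply: PP_dvd_n. Qed.

Lemma lg_Dn e : (forall i, e i <= m i) -> forall i, lg (Dn n (PP e)) i = e i.
Proof. by move=> H i; rewrite /lg gen_Dn ?PP_dvd_n // logP'. Qed.

Lemma Xi_lg I : Xi p m I = [set i | lg I i == m i].
Proof. by []. Qed.

Lemma PP_eq_n e : (PP e == n) = [forall i, e i == m i].
Proof.
apply/eqP/forallP => [E i|H]; first by apply/eqP; apply: (P_eq hp hlt E).
by apply: P_ext => i; apply/eqP.
Qed.

Lemma ess_iff I : is_ideal I -> essential I = (Xi p m I == set0).
Proof.
move=> hI; rewrite /essential hI /=; apply/idP/idP.
- case/andP => nz /forallP H; apply/eqP/setP => j; rewrite inE in_set0.
  apply/negP => /eqP lj.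
  pose c := fun i : 'I_k => if i == j then 0 else m i.
  have cle : forall i, c i <= m i by move=> i; rewrite /c; case: ifP.
  have hK := DnP_ideal cle.
  have Knz : Dn n (PP c) != [set 0%R].
    rewrite zero_iff // gen_Dn ?PP_dvd_n // PP_eq_n; apply/forallP => /(_ j).
    rewrite /c eqxx => /eqP E; by have := hm j; rewrite -E.
  have := H (Dn n (PP c)); rewrite hK Knz /= => /negP; apply.
  apply/eqP/setP => z; rewrite !inE; apply/andP/eqP => [[zI zK]|->]; last first.
    split; [exact: (idl0 hI) | by rewrite ?inE dvdn0].
  move: zI; rewrite (memI n1 hI) (gen_P hI) => zI.
  case: (posnP (val z)) => [v0|vp]; first by apply: val_inj.
  have : n %| val z.
    rewrite dvdP' //; apply/forallP => i.
    move: zI zK; rewrite !dvdP' // => /forallP h1 /forallP h2.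
    have := h1 i; have := h2 i; rewrite /c; case: eqP => [->|_ //].
    by move=> _; rewrite /lg lj.
  by move/(dvdn_leq vp); rewrite leqNgt valZ_lt.
- move/eqP => X0.
  have lt i : lg I i < m i.
    have := lg_le hI i; rewrite leq_eqVlt => /orP[/eqP E|//].
    have : i \in Xi p m I by rewrite inE; apply/eqP; exact: E.
    by rewrite X0 in_set0.
  rewrite zero_iff // (gen_P hI) PP_eq_n /=.
  apply/andP; split; first by apply/forallP => /(_ i0); rewrite ltn_eqF.
  apply/forallP => K; apply/implyP => /andP[hK Knz].
  move: Knz; rewrite zero_iff // (gen_P hK) PP_eq_n => /forallPn[j hj].
  have ltj : lg K j < m j by rewrite ltn_neqAle hj lg_le.
  pose c := fun i : 'I_k => if i == j then (m j).-1 else m i.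
  have cle : forall i, c i <= m i by move=> i; rewrite /c; case: eqP => [->|]; rewrite ?leq_pred.
  have xn : PP c %| n by apply: PP_dvd_n.
  have xlt : PP c < n.
    rewrite ltn_neqAle (dvdn_leq (P_gt0' m) xn) andbT PP_eq_n; apply/forallP => /(_ j); rewrite /c eqxx.
    move=> /eqP; have := hm j; lia.
  have inI : ((PP c)%:R)%R \in I.
    rewrite (gen_dvd n1 hI) (gen_P hI) P_dvd_le'; apply/forallP => i; rewrite /c.
    case: eqP => [->|_]; last exact: lg_le.
    by have := lt j; case: (m j).
  have inK : ((PP c)%:R)%R \in K.
    rewrite (gen_dvd n1 hK) (gen_P hK) P_dvd_le'; apply/forallP => i; rewrite /c.
    case: eqP => [->|_]; last exact: lg_le.
    by move: ltj; case: (m j).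
  apply/negP => /eqP E.
  have : ((PP c)%:R)%R \in I :&: K by rewrite inE inI inK.
  rewrite E inE => /eqP/(congr1 val); rewrite valZ // modn_small //= => E0.
  by have := P_gt0' c; rewrite E0.
Qed.

Lemma Xi_isum I J : is_ideal I -> is_ideal J ->
  Xi p m (isum I J) = Xi p m I :&: Xi p m J.
Proof.
move=> hI hJ; have hS := isum_ideal hI hJ.
have gI := gen_spec n1 hI; have gJ := gen_spec n1 hJ; have gS := gen_spec n1 hS.
case: gI => /andP[gI0 _] gIin _; case: gJ => /andP[gJ0 _] gJin _.
case: gS => /andP[gS0 _] gSin _.
have sI : gen (isum I J) %| gen I.
  rewrite -(gen_dvd n1 hS); apply/imset2P; exists ((gen I)%:R)%R 0%R => //.
    exact: idl0 hJ.
  by rewrite addr0.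
have sJ : gen (isum I J) %| gen J.
  rewrite -(gen_dvd n1 hS); apply/imset2P; exists 0%R ((gen J)%:R)%R => //.
    exact: idl0 hI.
  by rewrite add0r.
pose c := fun i => minn (lg I i) (lg J i).
have cI : PP c %| gen I by rewrite (gen_P hI) P_dvd_le'; apply/forallP => i; apply: geq_minl.
have cJ : PP c %| gen J by rewrite (gen_P hJ) P_dvd_le'; apply/forallP => i; apply: geq_minr.
have cn : PP c %| n by apply: dvdn_trans cI (gen_dvdn n1 hI).
have cS : PP c %| gen (isum I J).
  move: gSin => /imset2P[x y xI yJ E].
  have := congr1 val E; rewrite valZ // -(natrZ x) -(natrZ y) -natrD valZ //.
  move=> E2; rewrite -(dvdn_modE _ cn) E2 dvdn_modE // dvdn_add //.
    by apply: dvdn_trans cI _; rewrite -(memI n1 hI).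
  by apply: dvdn_trans cJ _; rewrite -(memI n1 hJ).
have lgS i : lg (isum I J) i = c i.
  apply/eqP; rewrite eqn_leq; apply/andP; split.
    rewrite leq_min /lg; apply/andP; split; exact: dvdn_leq_log.
  by move: cS; rewrite dvdP' // => /forallP.
have key i : (lg (isum I J) i == m i) = (lg I i == m i) && (lg J i == m i).
  rewrite lgS /c; have := lg_le hI i; have := lg_le hJ i.
  move: (lg I i) (lg J i) (m i) => a b d h1 h2; apply/eqP/andP => [E|[/eqP -> /eqP ->]].
    by split; rewrite eqn_leq ?h1 ?h2 -E ?geq_minl ?geq_minr.
  by rewrite minnn.
by apply/setP => i; rewrite !Xi_lg !inE key.
Qed.

Lemma nz_iff I : is_ideal I -> (I != [set 0%R]) = (Xi p m I != setT).
Proof.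
move=> hI; rewrite zero_iff // (gen_P hI) PP_eq_n; congr negb.
apply/forallP/eqP => [H|E i]; first by apply/setP => i; rewrite !inE H.
have : i \in Xi p m I by rewrite E inE.
by rewrite Xi_lg inE.
Qed.

Lemma nfull_iff I : is_ideal I -> (I != setT) = ~~ [forall i, lg I i == 0].
Proof.
move=> hI; rewrite full_iff // (gen_P hI); congr negb.
apply/eqP/forallP => [E i|H].
  have : PP (lg I) %| PP (fun _ => 0) by rewrite E /P big1 // => j _; rewrite expn0.
  by rewrite P_dvd_le' => /forallP/(_ i); rewrite leqn0.
by rewrite /P big1 // => j _; move/eqP: (H j) => ->; rewrite expn0.
Qed.

Definition mS (S : {set 'I_k}) i := if i \in S then m i else 0.

Lemma mS_le S i : mS S i <= m i.
Proof. by rewrite /mS; case: ifP. Qed.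

Lemma pidS_eq S : pidS n p m S = Dn n (PP (mS S)).
Proof.
rewrite /pidS.
have -> : (\prod_(i in S) p i ^ m i)%N = PP (mS S).
  by rewrite /P /mS big_mkcond; apply: eq_bigr => i _; case: ifP; rewrite ?expn0.
by rewrite pid_Dn // PP_dvd_n // => i; apply: mS_le.
Qed.

Lemma pidS_ideal S : is_ideal (pidS n p m S).
Proof. by rewrite pidS_eq; apply: DnP_ideal; apply: mS_le. Qed.

Lemma Xi_pidS S : Xi p m (pidS n p m S) = S.
Proof.
apply/setP => i; rewrite Xi_lg inE pidS_eq lg_Dn; last exact: mS_le.
rewrite /mS; case: ifP => _; first by rewrite eqxx.
by apply/negbTE; rewrite eq_sym -lt0n hm.
Qed.

Lemma pidS_Xi I : is_ideal I -> (forall i, lg I i == m i \/ lg I i == 0) ->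
   I = pidS n p m (Xi p m I).
Proof.
move=> hI H; rewrite pidS_eq {1}(ideal_eqP hI); congr (Dn n _); apply: P_ext => i.
rewrite /mS Xi_lg inE; case: eqP => [//|]; by case: (H i) => /eqP.
Qed.

Definition Bd := (\sum_(i < k) m i).+1.
Local Notation FF := {ffun 'I_k -> 'I_Bd}.

Lemma m_lt i : m i < Bd.
Proof. by rewrite ltnS (bigD1 i) //= leq_addr. Qed.

Definition vec (x : EV n) : FF := [ffun i => inord (lg (val x) i)].

Lemma EV_ideal (x : EV n) : is_ideal (val x).
Proof. by case/and3P: (valP x). Qed.

Lemma vec_val x i : val (vec x i) = lg (val x) i.
Proof.
rewrite ffunE /= inordK //; apply: leq_ltn_trans (m_lt i).
exact: (lg_le (EV_ideal x)).
Qed.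

Lemma vec_nat x i : nat_of_ord (vec x i) = lg (val x) i.
Proof. exact: vec_val. Qed.

Lemma lg_inj (x y : EV n) : (forall i, lg (val x) i = lg (val y) i) -> x = y.
Proof.
move=> H; apply: val_inj.
rewrite (ideal_eqP (EV_ideal x)) (ideal_eqP (EV_ideal y)).
by congr (Dn _ _); apply: P_ext.
Qed.

Lemma vec_inj : injective vec.
Proof. by move=> x y E; apply: lg_inj => i; rewrite -!vec_val E. Qed.

Lemma mkEV (e : 'I_k -> nat) : (forall i, e i <= m i) ->
  ~~ [forall i, e i == m i] -> ~~ [forall i, e i == 0] ->
  exists x : EV n, forall i, lg (val x) i = e i.
Proof.
move=> le nm n0.
have hD := DnP_ideal le.
have pr : nzproper (Dn n (PP e)).
  apply/and3P; split => //.
    by rewrite (nz_iff hD) Xi_lg; apply: contra nm => /eqP E;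
      apply/forallP => i; have : i \in [set: 'I_k] by []; rewrite -E inE (lg_Dn le).
  rewrite (nfull_iff hD); apply: contra n0 => /forallP H.
  by apply/forallP => i; rewrite -(lg_Dn le); apply: H.
by exists (Sub _ pr) => i /=; apply: (lg_Dn le).
Qed.

Lemma card_vert (R : pred (EV n)) (A : {set FF}) :
  (forall x, R x -> vec x \in A) ->
  (forall a, a \in A -> exists2 x, R x & vec x = a) ->
  #|[set x | R x]| = #|A|.
Proof.
move=> H1 H2; rewrite -(card_imset _ vec_inj); apply: eq_card => a.
apply/imsetP/idP => [[x]|/H2[x Rx <-]]; last by exists x; rewrite ?inE.
by rewrite inE => /H1 ? ->.
Qed.

Lemma vec_eq (x : EV n) (a : FF) : (forall i, lg (val x) i = val (a i)) -> vec x = a.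
Proof. by move=> H; apply/ffunP => i; apply: val_inj; rewrite vec_val H. Qed.

Lemma a_le (a : FF) (b : 'I_k -> bool) :
  (forall i, if b i then val (a i) == m i else val (a i) < m i) -> forall i, val (a i) <= m i.
Proof. by move=> H i; have := H i; case: (b i) => [/eqP ->|/ltnW]. Qed.

Lemma card_ess :
  #|[set x : EV n | essential (val x)]| = (\prod_(i < k) m i - 1)%N.
Proof.
pose F : 'I_k -> pred 'I_Bd := fun i y => y < m i.
pose z : FF := [ffun=> ord0].
have zF : z \in [set a : FF | [forall i, F i (a i)]].
  by rewrite inE; apply/forallP => i; rewrite /F /= ffunE hm.
rewrite (@card_vert _ ([set a : FF | [forall i, F i (a i)]] :\ z)).
- have E := cardsD1 z [set a : FF | [forall i, F i (a i)]].
  rewrite zF card_fam add1n in E.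
  have -> : (\prod_(i<k) m i = \prod_(i<k) #|F i|)%N.
    by apply: eq_bigr => i _; rewrite card_ltc // ltnW // m_lt.
  by rewrite E subn1.
- move=> x ess; rewrite !inE; apply/andP; split.
    apply/eqP => E.
    have : val x != setT by case/and3P: (valP x).
    rewrite (nfull_iff (EV_ideal x)) => /negP; apply; apply/forallP => i.
    by rewrite -vec_val E /z ffunE.
  apply/forallP => i; rewrite /F /= vec_val.
  move: ess; rewrite (ess_iff (EV_ideal x)) => /eqP X0.
  rewrite ltn_neqAle (lg_le (EV_ideal x)) andbT; apply/negP => /eqP E.
  have : i \in Xi p m (val x) by rewrite Xi_lg inE; apply/eqP.
  by rewrite X0 inE.
- move=> a; rewrite !inE => /andP[az /forallP aF].
  have le i : val (a i) <= m i by apply: ltnW; exact: aF i.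
  have nm : ~~ [forall i, val (a i) == m i].
    by apply/forallPn; exists i0; rewrite ltn_eqF //; exact: aF i0.
  have n0 : ~~ [forall i, val (a i) == 0].
    apply: contra az => /forallP H; apply/eqP/ffunP => i; apply: val_inj.
    by rewrite /z ffunE; apply/eqP; exact: H i.
  have [x Hx] := @mkEV (fun i => val (a i)) le nm n0.
  exists x; last exact: vec_eq.
  rewrite /= (ess_iff (EV_ideal x)); apply/eqP/setP => i.
  by rewrite Xi_lg !inE Hx ltn_eqF //; exact: aF i.
Qed.

Lemma card_block (S : {set 'I_k}) : S != set0 -> S != setT ->
  #|[set x : EV n | Xi p m (val x) == S]| = (\prod_(i < k | i \notin S) m i)%N.
Proof.
move=> S0 ST.
pose F : 'I_k -> pred 'I_Bd := fun i => if i \in S then (fun y : 'I_Bd => val y == m i) else (fun y : 'I_Bd => y < m i).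
rewrite (@card_vert _ [set a : FF | [forall i, F i (a i)]]).
- rewrite card_fam [RHS]big_mkcond; apply: eq_bigr => i _ /=; rewrite /F.
  case: ifP => _ /=; last by rewrite card_ltc // ltnW // m_lt.
  rewrite -(card1 (inord (m i) : 'I_Bd)); apply: eq_card => y; rewrite !inE.
  apply/eqP/eqP => [E|->]; first by apply: val_inj; rewrite /= inordK ?m_lt.
  by rewrite /= inordK ?m_lt.
- move=> x /eqP XS; rewrite inE; apply/forallP => i; rewrite /F.
  have := lg_le (EV_ideal x) i.
  have : (i \in Xi p m (val x)) = (i \in S) by rewrite XS.
  rewrite Xi_lg inE; case: (i \in S) => /= E; rewrite ?vec_val ?vec_nat; first by rewrite E.
  by rewrite ltn_neqAle E.
- move=> a; rewrite inE => /forallP aF.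
  have aF' i : if i \in S then val (a i) == m i else val (a i) < m i.
    by have := aF i; rewrite /F; case: (i \in S).
  have le := a_le aF'.
  have nm : ~~ [forall i, val (a i) == m i].
    apply/forallPn; have /subsetPn[i _ iS] : ~~ ([set: 'I_k] \subset S).
      by apply: contra ST => sub; rewrite eqEsubset subsetT.
    by exists i; have := aF' i; rewrite (negbTE iS) => /ltn_eqF ->.
  have n0 : ~~ [forall i, val (a i) == 0].
    apply/forallPn; have /set0Pn[i iS] := S0.
    by exists i; have := aF' i; rewrite iS => /eqP ->; rewrite -lt0n hm.
  have [x Hx] := @mkEV (fun i => val (a i)) le nm n0.
  exists x; last exact: vec_eq.
  rewrite /=; apply/eqP/setP => i; rewrite Xi_lg inE Hx.
  have := aF' i; case: (i \in S) => //; exact: ltn_eqF.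
Qed.


Lemma EG_adj (x y : EV n) :
  @adj (EG n) x y = (x != y) && [disjoint Xi p m (val x) & Xi p m (val y)].
Proof.
rewrite /= (ess_iff (isum_ideal (EV_ideal x) (EV_ideal y))).
by rewrite (Xi_isum (EV_ideal x) (EV_ideal y)) setI_eq0.
Qed.

Lemma GV_spec (v : GV n p m) :
  [/\ val v = pidS n p m (Xi p m (val v)), Xi p m (val v) != set0 & Xi p m (val v) != setT].
Proof.
case/existsP: (valP v) => S /and3P[S0 ST /eqP E].
by rewrite E Xi_pidS.
Qed.

Lemma GG_adj (v w : GV n p m) :
  @adj (GG n p m) v w = [disjoint Xi p m (val v) & Xi p m (val w)].
Proof.
apply/existsP/idP => [[S /existsP[T /and3P[/eqP Ev /eqP Ew D]]]|D].
  by rewrite Ev Ew !Xi_pidS.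
have [Ev _ _] := GV_spec v; have [Ew _ _] := GV_spec w.
by exists (Xi p m (val v)); apply/existsP; exists (Xi p m (val w)); rewrite -Ev -Ew !eqxx D.
Qed.

Lemma EV_XiT (x : EV n) : Xi p m (val x) != setT.
Proof. by rewrite -(nz_iff (EV_ideal x)); case/and3P: (valP x). Qed.

Lemma noness_Xi (x : EV n) : ~~ essential (val x) -> Xi p m (val x) != set0.
Proof. by rewrite (ess_iff (EV_ideal x)). Qed.

Lemma Gvert_pidS S : S != set0 -> S != setT -> Gvert p m (pidS n p m S).
Proof. by move=> S0 ST; apply/existsP; exists S; rewrite S0 ST eqxx. Qed.

Definition gv_of (x : EV n) (H : ~~ essential (val x)) : GV n p m :=
  Sub (pidS n p m (Xi p m (val x))) (Gvert_pidS (noness_Xi H) (EV_XiT x)).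

Lemma blk_proof (x : EV n) (H : ~~ essential (val x)) :
  Xi p m (val x) == Xi p m (val (gv_of H)).
Proof. by rewrite /= Xi_pidS. Qed.

Definition blk_of (x : EV n) (H : ~~ essential (val x)) : vtx (block (gv_of H)) :=
  Sub x (blk_proof H).

Lemma tagged_as_val (u w : vtx (Hgraph n p m)) :
  tag u = tag w -> val (tagged_as u w) = val (tagged w).
Proof. by case: u w => [a b] [c d] /= E; subst c; rewrite tagged_asE. Qed.

Lemma sigT_eq (v v' : GV n p m) (J : vtx (block v)) (J' : vtx (block v')) :
  v = v' -> val J = val J' ->
  existT (fun w => vtx (block w)) v J = existT (fun w => vtx (block w)) v' J'.
Proof. by move=> E; subst v' => E2; congr existT; apply: val_inj. Qed.

Lemma disjoint_self (S : {set 'I_k}) : [disjoint S & S] = (S == set0).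
Proof. by rewrite -setI_eq0 setIid. Qed.

Lemma part2 (v : GV n p m) :
  giso (block v) (Kedgeless (\prod_(i < k | i \notin Xi p m (val v)) m i)).
Proof.
have [_ S0 ST] := GV_spec v.
have [f fb] : exists f : vtx (block v) -> 'I_(\prod_(i < k | i \notin Xi p m (val v)) m i),
    bijective f.
  apply: card_bij; rewrite /= card_sig -(card_block S0 ST).
  by apply: eq_card => x; rewrite !inE.
exists f; split => // a b.
change (false = @adj (EG n) (val a) (val b)); rewrite EG_adj; have /eqP -> := valP a; have /eqP -> := valP b.
by rewrite disjoint_self (negbTE S0) andbF.
Qed.

Definition bsplit (b : bool) : {b} + {~~ b} :=
  match b as c return ({c} + {~~ c}) with true => left erefl | false => right erefl end.

Lemma part1 : exists f : vtx (EG n) ->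
                  vtx (gjoin2 (Kcomplete (\prod_(i < k) m i - 1)) (Hgraph n p m)),
         [/\ bijective f,
             forall x y, adj (f x) (f y) = adj x y &
             forall x, isl (f x) = essential (val x)].
Proof.
have [eb [ebi ebK ebiK]] : exists eb : {x : EV n | essential (val x)} -> 'I_(\prod_(i < k) m i - 1),
    bijective eb.
  apply: card_bij; rewrite card_sig -card_ess.
  by apply: eq_card => x; rewrite !inE.
pose f := fun x : EV n =>
  match bsplit (essential (val x)) return
     ('I_(\prod_(i < k) m i - 1) + {v : GV n p m & vtx (block v)})%type with
  | left H => inl (eb (Sub x H))
  | right H => inr (existT (fun w => vtx (block w)) (gv_of H) (blk_of H))
  end.
have fE1 x (H : essential (val x)) : f x = inl (eb (Sub x H)).
  rewrite /f; case: (bsplit (essential (val x))) => H'; last by exfalso; move: H'; rewrite H.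
  by rewrite (bool_irrelevance H H').
have fE2 x (H : ~~ essential (val x)) :
    f x = inr (existT (fun w => vtx (block w)) (gv_of H) (blk_of H)).
  rewrite /f; case: (bsplit (essential (val x))) => H'; first by exfalso; move: H; rewrite H'.
  by rewrite (bool_irrelevance H H').
have essX0 (x : EV n) : essential (val x) -> Xi p m (val x) = set0.
  by rewrite (ess_iff (EV_ideal x)) => /eqP.
exists f; split.
- pose g := fun y : ('I_(\prod_(i < k) m i - 1) + {v : GV n p m & vtx (block v)})%type =>
    match y with inl a => val (ebi a) | inr u => val (tagged u) end.
  exists g => [x|[a|[v J]]].
  + case: (boolP (essential (val x))) => H; first by rewrite (fE1 x H) /= ebK.
    by rewrite (fE2 x H).
  + rewrite /g (fE1 _ (valP (ebi a))); congr inl.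
    have -> : Sub (val (ebi a)) (valP (ebi a)) = ebi a by apply: val_inj.
    by rewrite ebiK.
  + rewrite /g /=.
    have XJ : Xi p m (val (val J)) = Xi p m (val v) by apply/eqP; exact: (valP J).
    have [Ev S0 _] := GV_spec v.
    have H : ~~ essential (val (val J)).
      by rewrite (ess_iff (EV_ideal (val J))) XJ.
    rewrite (fE2 _ H); congr inr; apply: sigT_eq => //.
    by apply: val_inj; rewrite /= XJ -Ev.
- move=> x y.
  case: (boolP (essential (val x))) => Hx; case: (boolP (essential (val y))) => Hy.
  + rewrite (fE1 x Hx) (fE1 y Hy) EG_adj /= (essX0 _ Hx).
    rewrite -setI_eq0 set0I eqxx andbT.
    rewrite (inj_eq (bij_inj (Bijective ebK ebiK))).
    by rewrite -(inj_eq val_inj).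
  + rewrite (fE1 x Hx) (fE2 y Hy) EG_adj /= (essX0 _ Hx).
    rewrite -setI_eq0 set0I eqxx andbT; apply/esym/eqP => E.
    by move: Hx Hy; rewrite E => ->.
  + rewrite (fE2 x Hx) (fE1 y Hy) EG_adj /= (essX0 _ Hy).
    rewrite -setI_eq0 setI0 eqxx andbT; apply/esym/eqP => E.
    by move: Hx Hy; rewrite E => /negP.
  + rewrite (fE2 x Hx) (fE2 y Hy) EG_adj /=.
    case: eqP => [E|NE].
      have := @tagged_as_val (existT _ (gv_of Hx) (blk_of Hx)) (existT _ (gv_of Hy) (blk_of Hy)) E.
      rewrite /= => ->.
      by rewrite (ess_iff (isum_ideal (EV_ideal x) (EV_ideal y))) (Xi_isum (EV_ideal x) (EV_ideal y)) setI_eq0.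
    rewrite -[LHS]/(@adj (GG n p m) (gv_of Hx) (gv_of Hy)) GG_adj /= !Xi_pidS.
    case D: [disjoint _ & _]; rewrite ?andbF ?andbT //.
    apply/esym/eqP => E; apply: NE; apply: val_inj; by rewrite /= E.
- move=> x; case: (boolP (essential (val x))) => H.
    by rewrite (fE1 x H).
  by rewrite (fE2 x H).
Qed.

End Vert.

Section Part3.
Variables (k : nat) (p m : 'I_k -> nat).
Hypothesis hp : forall i, prime (p i).
Hypothesis hlt : forall i j : 'I_k, i < j -> p i < p j.
Hypothesis hm : forall i, 0 < m i.
Variable i0 : 'I_k.

Definition one : 'I_k -> nat := fun _ => 1.
Let hone : forall i, 0 < one i := fun _ => isT.
Local Notation r := (P p one).
Local Notation n := (P p m).
Let r1 : 1 < r := n_gt1 hp hlt hone i0.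
Local Notation lgr := (@lg k p one).

Lemma annih_iff a b : (forall i, a i <= one i) -> (forall i, b i <= one i) ->
  annih (Dn r (P p a)) (Dn r (P p b)) = [forall i, 0 < a i + b i].
Proof.
move=> ha hb.
have da : P p a %| r := PP_dvd_n hp hlt ha.
have db : P p b %| r := PP_dvd_n hp hlt hb.
transitivity (r %| P p a * P p b); last by rewrite (PM p) (P_dvd_le hp hlt).
apply/idP/idP.
- move/forall_inP => H.
  have Hx : ((P p a)%:R)%R \in Dn r (P p a) by rewrite inE valZ // dvdn_modE.
  have Hy : ((P p b)%:R)%R \in Dn r (P p b) by rewrite inE valZ // dvdn_modE.
  have /forall_inP/(_ _ Hy)/eqP E := H _ Hx.
  have := congr1 val E; rewrite -natrM valZ //= => E2.
  by rewrite /dvdn E2.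
- move=> H; apply/forall_inP => x; rewrite inE => xa; apply/forall_inP => y; rewrite inE => yb.
  apply/eqP/val_inj; rewrite -(natrZ x) -(natrZ y) -natrM valZ //=.
  by apply/eqP; rewrite -/(dvdn r _); apply: dvdn_trans H (dvdn_mul xa yb).
Qed.

Definition cS (v : GV n p m) : 'I_k -> nat := fun i => nat_of_bool (i \notin Xi p m (val v)).

Lemma cS_le v i : cS v i <= one i.
Proof. exact: leq_b1. Qed.

Definition cT (v : GV n p m) : 'I_k -> nat := fun i => nat_of_bool (i \in Xi p m (val v)).

Lemma cT_le v i : cT v i <= one i.
Proof. exact: leq_b1. Qed.

Lemma hproof (v : GV n p m) :
  [&& is_ideal (Dn r (P p (cS v))), Dn r (P p (cS v)) != [set 0%R] &
      [exists K : {set 'Z_r}, [&& is_ideal K, K != [set 0%R] & annih (Dn r (P p (cS v))) K]]].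
Proof.
have [_ S0 ST] := GV_spec hp hlt hm i0 v.
have hD := DnP_ideal hp hlt hone i0 (cS_le v).
have hK := DnP_ideal hp hlt hone i0 (cT_le v).
apply/and3P; split => //.
  rewrite (nz_iff hp hlt hone i0 hD) Xi_lg; apply/negP => /eqP/setP E.
  have /set0Pn[i iS] := S0.
  have := E i; rewrite !inE (lg_Dn hp hlt hone i0 (cS_le v)) /cS iS.
  by [].
apply/existsP; exists (Dn r (P p (cT v))); rewrite hK /=.
rewrite (nz_iff hp hlt hone i0 hK) Xi_lg (annih_iff (@cS_le v) (@cT_le v)); apply/andP; split.
  apply/negP => /eqP/setP E.
  have /subsetPn[i _ iS] : ~~ ([set: 'I_k] \subset Xi p m (val v)).
    by apply: contra ST => sub; rewrite eqEsubset subsetT.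
  have := E i; rewrite !inE (lg_Dn hp hlt hone i0 (cT_le v)) /cT (negbTE iS).
  by [].
by apply/forallP => i; rewrite /cS /cT; case: (i \in _).
Qed.

Definition hmap (v : GV n p m) : AV r := Sub (Dn r (P p (cS v))) (hproof v).

Lemma AV_ideal (I : AV r) : is_ideal (val I).
Proof. by case/and3P: (valP I). Qed.

Lemma AV_nz (I : AV r) : val I != [set 0%R].
Proof. by case/and3P: (valP I). Qed.

Lemma AV_nfull (I : AV r) : val I != setT.
Proof.
case/and3P: (valP I) => _ _ /existsP[K /and3P[hK Knz an]].
apply/eqP => E; move: Knz; rewrite -(negbK (_ == _)) => /negP; apply; apply/negPn.
apply/eqP/setP => y; rewrite inE; apply/idP/eqP => [yK|->]; last exact: idl0 hK.
have one_in : (1%R : 'Z_r) \in val I by rewrite E inE.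
move/forall_inP: an => /(_ _ one_in) /forall_inP /(_ _ yK) /eqP.
by rewrite mul1r.
Qed.

Lemma lgr_le (I : AV r) i : lgr (val I) i <= 1.
Proof. exact: (lg_le hp hlt hone i0 (AV_ideal I)). Qed.

Definition Tset (I : AV r) : {set 'I_k} := [set i | lgr (val I) i == 0].

Lemma T0 (I : AV r) : Tset I != set0.
Proof.
have := AV_nz I; rewrite (nz_iff hp hlt hone i0 (AV_ideal I)) => XT.
have /subsetPn[i _ iX] : ~~ ([set: 'I_k] \subset Xi p one (val I)).
  by apply: contra XT => sub; rewrite eqEsubset subsetT.
apply/set0Pn; exists i; rewrite inE.
move: iX; rewrite Xi_lg inE; have := lgr_le I i; rewrite /one.
by case: (lgr (val I) i) => [|[]].
Qed.

Lemma TT (I : AV r) : Tset I != setT.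
Proof.
have := AV_nfull I; rewrite (nfull_iff hp hlt hone i0 (AV_ideal I)) => /forallPn[i hi].
apply/eqP/setP => /(_ i); by rewrite !inE (negbTE hi).
Qed.

Definition hinv (I : AV r) : GV n p m :=
  Sub (pidS n p m (Tset I)) (Gvert_pidS p m (T0 I) (TT I)).

Lemma hK : cancel hmap hinv.
Proof.
move=> v; apply: val_inj => /=.
have [Ev _ _] := GV_spec hp hlt hm i0 v.
rewrite [RHS]Ev; congr (pidS _ _ _ _); apply/setP => i.
rewrite /Tset inE /= (lg_Dn hp hlt hone i0 (cS_le v)) /cS.
by case: (i \in _).
Qed.

Lemma hinvK : cancel hinv hmap.
Proof.
move=> I; apply: val_inj => /=.
rewrite [RHS](ideal_eqP hp hlt hone i0 (AV_ideal I)); congr (Dn _ _); apply: P_ext => i.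
rewrite /cS /= (Xi_pidS hp hlt hm i0) /Tset inE.
by have := lgr_le I i; case: (lgr (val I) i) => [|[]].
Qed.

Lemma part3 : giso (GG n p m) (AIG r).
Proof.
exists hmap; split; first exact: (Bijective hK hinvK).
move=> v w.
rewrite (GG_adj hp hlt hm i0) /=.
rewrite (annih_iff (@cS_le v) (@cS_le w)).
have E : [forall i, 0 < cS v i + cS w i] = [disjoint Xi p m (val v) & Xi p m (val w)].
  apply/forallP/idP => [H|D i].
    rewrite -setI_eq0; apply/eqP/setP => i; rewrite in_setI in_set0.
    by have := H i; rewrite /cS; case: (i \in _); case: (i \in _).
  move: D; rewrite -setI_eq0 => /eqP/setP/(_ i); rewrite in_setI in_set0 /cS.
  by case: (i \in _); case: (i \in _).
rewrite E; case D: [disjoint _ & _]; rewrite ?andbF // andbT.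
apply/eqP => Ehw; have Evw : v = w by rewrite -(hK v) Ehw hK.
have [_ S0 _] := GV_spec hp hlt hm i0 v.
by move: D; rewrite Evw (disjoint_self) -Evw (negbTE S0).
Qed.

End Part3.

Theorem mainTheorem7 (k : nat) (p m : 'I_k -> nat)
  (hp : forall i, prime (p i))
  (hlt : forall i j : 'I_k, i < j -> p i < p j)
  (hm : forall i, 0 < m i)
  (n : nat) (hn : n = \prod_(i < k) p i ^ m i)
  (hex : exists i, 1 < m i) :
  [/\ (exists f : vtx (EG n) ->
                  vtx (gjoin2 (Kcomplete (\prod_(i < k) m i - 1)) (Hgraph n p m)),
         [/\ bijective f,
             forall x y, adj (f x) (f y) = adj x y &
             forall x, isl (f x) = essential (val x)]),
      (forall v : GV n p m,
         giso (block v) (Kedgeless (\prod_(i < k | i \notin Xi p m (val v)) m i))) &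
      giso (GG n p m) (AIG (\prod_(i < k) p i))].
Proof.
have [i0 _] := hex.
subst n.
split.
- exact: (part1 hp hlt hm i0).
- exact: (part2 hp hlt hm i0).
- have -> : (\prod_(i < k) p i = P p (one (k:=k)))%N.
    by rewrite /P; apply: eq_bigr => i _; rewrite expn1.
  exact: (part3 hp hlt hm i0).
Qed.
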